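(* Let $\Lambda_\infty=(r_0=0,r_1,r_2,\dots)$ be strictly increasing with $\lim_{n\to\infty}r_n=\infty$ and $\sum_{i=1}^\infty 1/r_i<\infty$. Let $0<a<1$, $n\ge1$, and let $P\in E(\Lambda_n)$ be $\mathbb{R}^s$-valued with $P'(a)\neq 0$. Then there is a constant $c>0$ depending only on $\Lambda_\infty$ and $a$ such that for all $m\ge n$, $$\bigl\|\eta_0(P,\Lambda_m,[a,1])-\eta_1(P,\Lambda_m,[a,1])\bigr\|_\infty\ \ge\ \frac{\|P'(a)\|_\infty}{c}>0 .$$
   Context: For a sequence $0=r_0<r_1<r_2<\cdots$ of reals, write $\Lambda_n=(r_0,\dots,r_n)$ and $E(\Lambda_n)=\mathrm{span}(t^{r_0}=1,t^{r_1},\dots,t^{r_n})$ (functions on $]0,\infty[$); an $\mathbb{R}^s$-valued element of $E(\Lambda_n)$ is a map $t\mapsto\sum_{k=0}^n t^{r_k}A_k$ with $A_k\in\mathbb{R}^s$. For an interval $[a,b]$ with $0<a<b$, the Chebyshev–Bernstein basis $(B^n_{0,\Lambda_n},\dots,B^n_{n,\Lambda_n})$ of $E(\Lambda_n)$ over $[a,b]$ is the unique basis of $E(\Lambda_n)$ with $\sum_{k=0}^n B^n_{k,\Lambda_n}\equiv 1$ such that, for each $k$, $B^n_{k,\Lambda_n}$ has a zero of multiplicity (exactly) $k$ at $a$ and of multiplicity $n-k$ at $b$. For $P\in E(\Lambda_n)$ and $m\ge n$, the control points $\eta_i(P,\Lambda_m,[a,b])\in\mathbb{R}^s$, $i=0,\dots,m$,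 are defined by $P(t)=\sum_{i=0}^m B^m_{i,\Lambda_m}(t)\,\eta_i(P,\Lambda_m,[a,b])$. *)

(* Defs.v *)
From Stdlib Require Import Reals Lra Lia.
Open Scope R_scope.

(* A generic element of E(Lambda_n) with real coefficients c 0, ..., c n:
   t |-> sum_{k=0}^n c_k t^{r_k}  (t > 0, t^x := Rpower t x). *)
Definition Efun (r : nat -> R) (n : nat) (c : nat -> R) (t : R) : R :=
  sum_f_R0 (fun k => c k * Rpower t (r k)) n.

Fixpoint has_nth_deriv (k : nat) (f g : R -> R) : Prop :=
  match k with
  | O => forall t, 0 < t -> f t = g t
  | S k' => exists h : R -> R,
      (forall t, 0 < t -> derivable_pt_lim f t (h t)) /\ has_nth_deriv k' h g
  end.

Definition zero_of_mult (f : R -> R) (x : R) (k : nat) : Prop :=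
  (forall j, (j <= k)%nat -> exists g, has_nth_deriv j f g) /\
  (forall j g, (j < k)%nat -> has_nth_deriv j f g -> g x = 0) /\
  (forall g, has_nth_deriv k f g -> g x <> 0).

Definition CB_basis (r : nat -> R) (m : nat) (a b : R) (B : nat -> R -> R) : Prop :=
  (forall k, (k <= m)%nat -> exists c : nat -> R, forall t, 0 < t -> B k t = Efun r m c t) /\
  (forall lam : nat -> R,
      (forall t, 0 < t -> sum_f_R0 (fun k => lam k * B k t) m = 0) ->
      forall k, (k <= m)%nat -> lam k = 0) /\
  (forall t, 0 < t -> sum_f_R0 (fun k => B k t) m = 1) /\
  (forall k, (k <= m)%nat -> zero_of_mult (B k) a k /\ zero_of_mult (B k) b (m - k)).

Fixpoint norm_inf (s : nat) (v : nat -> R) : R :=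
  match s with
  | O => 0
  | S s' => Rmax (norm_inf s' v) (Rabs (v s'))
  end.

(* Main.v *)
Require Import Defs.
From Stdlib Require Import Reals Lra Lia ClassicalEpsilon.
Open Scope R_scope.

Fixpoint fallP (j : nat) (x : R) : R :=
  match j with O => 1 | S j' => fallP j' x * (x - INR j') end.

Fixpoint Pol (m : nat) (p : R -> R) : Prop :=
  match m with
  | O => forall x, p x = 0
  | S m' => exists q b, Pol m' q /\ forall x, p x = q x + b * fallP m' x
  end.

Lemma Pol_ext m p p' : Pol m p -> (forall x, p x = p' x) -> Pol m p'.
Proof.
  destruct m as [|m]; simpl.
  - intros H E x. rewrite <- E. apply H.
  - intros [q [b [Hq E1]]] E. exists q, b. split; auto. intro x. rewrite <- E. apply E1.
Qed.

Lemma Pol_zero m : Pol m (fun _ => 0).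
Proof.
  induction m; simpl; auto. exists (fun _ => 0), 0. split; auto. intros; ring.
Qed.

Lemma Pol_S m p : Pol m p -> Pol (S m) p.
Proof.
  intro H. simpl. exists p, 0. split; auto. intros; ring.
Qed.

Lemma Pol_le m m' p : (m <= m')%nat -> Pol m p -> Pol m' p.
Proof.
  induction 1; auto. intro. apply Pol_S; auto.
Qed.

Lemma Pol_plus m p q : Pol m p -> Pol m q -> Pol m (fun x => p x + q x).
Proof.
  revert p q; induction m; simpl; intros p q Hp Hq.
  - intros x. rewrite Hp, Hq; ring.
  - destruct Hp as [p1 [b1 [H1 E1]]]. destruct Hq as [q1 [b2 [H2 E2]]].
    exists (fun x => p1 x + q1 x), (b1 + b2). split; auto.
    intro x. rewrite E1, E2. ring.
Qed.

Lemma Pol_scal m p c : Pol m p -> Pol m (fun x => c * p x).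
Proof.
  revert p; induction m; simpl; intros p Hp.
  - intros x. rewrite Hp; ring.
  - destruct Hp as [p1 [b1 [H1 E1]]].
    exists (fun x => c * p1 x), (c * b1). split; auto.
    intro x. rewrite E1. ring.
Qed.

Lemma Pol_fall j : Pol (S j) (fallP j).
Proof.
  simpl. exists (fun _ => 0), 1. split. apply Pol_zero. intros; ring.
Qed.

Lemma Pol_mulX m q : Pol m q -> Pol (S m) (fun x => x * q x).
Proof.
  revert q; induction m; intros q Hq.
  - simpl in Hq. apply Pol_ext with (fun _ => 0). apply Pol_zero.
    intro x. rewrite Hq. ring.
  - destruct Hq as [q1 [b [H1 E1]]].
    assert (A1 : Pol (S (S m)) (fun x => x * q1 x)) by (apply Pol_S; auto).
    assert (A2 : Pol (S (S m)) (fun x => fallP (S m) x + INR m * fallP m x)).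
    { apply Pol_plus. apply Pol_fall. apply Pol_scal. apply Pol_S, Pol_fall. }
    apply Pol_ext with (fun x => x * q1 x + b * (fallP (S m) x + INR m * fallP m x)).
    apply Pol_plus; auto. apply Pol_scal; auto.
    intro x. rewrite E1. simpl. ring.
Qed.

Lemma Pol_lin m q r : Pol m q -> Pol (S m) (fun x => (x - r) * q x).
Proof.
  intro H. apply Pol_ext with (fun x => x * q x + (- r) * q x).
  apply Pol_plus. apply Pol_mulX; auto. apply Pol_S, Pol_scal; auto.
  intro; ring.
Qed.

Lemma Pol_const b : Pol 1 (fun _ => b).
Proof. simpl. exists (fun _ => 0), b. split; auto. intros; ring. Qed.

Lemma fall_factor j r : exists Q, Pol j Q /\ forall x, fallP j x - fallP j r = (x - r) * Q x.
Proof.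
  induction j.
  - exists (fun _ => 0). split. apply Pol_zero. intros; simpl; ring.
  - destruct IHj as [Q [HQ E]].
    exists (fun x => Q x * (x - INR j) + fallP j r).
    split.
    + apply Pol_plus. apply Pol_ext with (fun x => (x - INR j) * Q x).
      apply Pol_lin; auto. intro; ring.
      apply Pol_le with 1%nat. lia. apply Pol_const.
    + intro x. simpl.
      replace (fallP j x * (x - INR j) - fallP j r * (r - INR j)) with
        ((fallP j x - fallP j r) * (x - INR j) + fallP j r * (x - r)) by ring.
      rewrite E. ring.
Qed.

Lemma Pol_factor m p r : Pol (S m) p ->
  exists q, Pol m q /\ forall x, p x - p r = (x - r) * q x.
Proof.
  revert p; induction m; intros p Hp.
  - destruct Hp as [q [b [Hq E]]]. simpl in Hq.
    exists (fun _ => 0). split. apply Pol_zero. intro x. rewrite !E, !Hq. simpl. ring.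
  - destruct Hp as [p1 [b [H1 E]]].
    destruct (IHm p1 H1) as [q1 [Hq1 E1]].
    destruct (fall_factor (S m) r) as [Q [HQ EQ]].
    exists (fun x => q1 x + b * Q x). split.
    + apply Pol_plus. apply Pol_S; auto. apply Pol_scal; auto.
    + intro x. rewrite !E.
      replace (p1 x + b * fallP (S m) x - (p1 r + b * fallP (S m) r)) with
        ((p1 x - p1 r) + b * (fallP (S m) x - fallP (S m) r)) by ring.
      rewrite E1, EQ. ring.
Qed.

Definition mom (r c : nat -> R) (n : nat) (p : R -> R) : R :=
  sum_f_R0 (fun k => c k * p (r k)) n.

Lemma sum_plus' f g n : sum_f_R0 (fun k => f k + g k) n = sum_f_R0 f n + sum_f_R0 g n.
Proof. induction n; simpl; [ring | rewrite IHn; ring]. Qed.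
Lemma sum_scal' f c n : sum_f_R0 (fun k => c * f k) n = c * sum_f_R0 f n.
Proof. induction n; simpl; [ring | rewrite IHn; ring]. Qed.

Lemma mom_from_fall r c M :
  (forall j, (j < M)%nat -> sum_f_R0 (fun k => c k * fallP j (r k)) M = 0) ->
  forall p, Pol M p -> mom r c M p = 0.
Proof.
  intros H.
  assert (G : forall j, (j <= M)%nat -> forall p, Pol j p -> mom r c M p = 0).
  { induction j; intros Hj p Hp.
    - unfold mom. simpl in Hp. rewrite (sum_eq _ (fun _ => 0)).
      clear. induction M; simpl; [ring| rewrite IHM; ring].
      intros i _. rewrite Hp; ring.
    - destruct Hp as [q [b [Hq E]]]. unfold mom.
      rewrite (sum_eq _ (fun k => c k * q (r k) + b * (c k * fallP j (r k)))).
      rewrite sum_plus', sum_scal'. rewrite H by lia.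
      fold (mom r c M q). rewrite IHj; auto. ring. lia.
      intros i _. rewrite E; ring. }
  intros p Hp. apply (G M); auto.
Qed.

Lemma rinc (r : nat -> R) : (forall i, r i < r (S i)) -> forall i j, (i < j)%nat -> r i < r j.
Proof.
  intros H i j Hij. induction Hij. apply H. specialize (H m). lra.
Qed.

Lemma rinc_le (r : nat -> R) : (forall i, r i < r (S i)) -> forall i j, (i <= j)%nat -> r i <= r j.
Proof.
  intros H i j Hij. destruct (Nat.eq_dec i j). subst; lra.
  left; apply rinc; auto; lia.
Qed.

Fixpoint wseq (r : nat -> R) (m : nat) (k : nat) : R :=
  match m with
  | O => if (k =? 0)%nat then 1 else 0
  | S m' => if (k <=? m')%nat then wseq r m' k * r (S m') / (r (S m') - r k)
            else if (k =? S m')%nat then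
              - sum_f_R0 (fun i => wseq r m' i * r (S m') / (r (S m') - r i)) m'
            else 0
  end.

Lemma wseq_S r m k : wseq r (S m) k =
  if (k <=? m)%nat then wseq r m k * r (S m) / (r (S m) - r k)
  else if (k =? S m)%nat then
    - sum_f_R0 (fun i => wseq r m i * r (S m) / (r (S m) - r i)) m
  else 0.
Proof. reflexivity. Qed.

Lemma wseq_lt r m k : (k <= m)%nat ->
  wseq r (S m) k = wseq r m k * r (S m) / (r (S m) - r k).
Proof.
  intro H. rewrite wseq_S. apply Nat.leb_le in H. rewrite H. reflexivity.
Qed.

Lemma wseq_top r m :
  wseq r (S m) (S m) = - sum_f_R0 (fun i => wseq r m i * r (S m) / (r (S m) - r i)) m.
Proof.
  rewrite wseq_S.
  assert (H : (S m <=? m)%nat = false) by (apply Nat.leb_gt; lia).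
  rewrite H. rewrite Nat.eqb_refl. reflexivity.
Qed.

Lemma wsum r m : sum_f_R0 (wseq r (S m)) (S m) = 0.
Proof.
  change (sum_f_R0 (wseq r (S m)) (S m)) with (sum_f_R0 (wseq r (S m)) m + wseq r (S m) (S m)).
  rewrite wseq_top.
  rewrite (sum_eq _ (fun i => wseq r m i * r (S m) / (r (S m) - r i))). ring.
  intros i Hi. apply wseq_lt; auto.
Qed.

Lemma wseq0 r m : r 0%nat = 0 -> (forall i, r i < r (S i)) -> wseq r m 0 = 1.
Proof.
  intros H0 Hi. induction m. reflexivity.
  rewrite wseq_lt by lia. rewrite IHm, H0.
  assert (r (S m) > 0). { rewrite <- H0. apply rinc; auto; lia. }
  field. lra.
Qed.

Lemma wmom r : (forall i, r i < r (S i)) ->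
  forall m p, Pol m p -> mom r (wseq r m) m p = 0.
Proof.
  intros Hr. induction m; intros p Hp.
  - unfold mom. simpl. simpl in Hp. rewrite Hp. ring.
  - destruct (Pol_factor m p (r (S m)) Hp) as [q [Hq E]].
    set (R := r (S m)).
    unfold mom.
    rewrite (sum_eq _ (fun k => p R * wseq r (S m) k + wseq r (S m) k * (r k - R) * q (r k))).
    2:{ intros i _. replace (p (r i)) with (p R + (p (r i) - p R)) by ring. rewrite E. fold R. ring. }
    rewrite sum_plus', sum_scal'. rewrite wsum.
    match goal with |- context [sum_f_R0 ?f (S m)] =>
      change (sum_f_R0 f (S m)) with (sum_f_R0 f m + f (S m)) end.
    cbv beta. replace (r (S m) - R) with 0 by (unfold R; ring).
    rewrite (sum_eq _ (fun k => - R * (wseq r m k * q (r k)))).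
    rewrite sum_scal'. fold (mom r (wseq r m) m q). rewrite IHm; auto. ring.
    intros i Hi. rewrite wseq_lt by auto.
    assert (r i < R) by (apply rinc; auto; lia). unfold R in *. field. lra.
Qed.

Fixpoint prodL (r : nat -> R) (k j : nat) (x : R) : R :=
  match j with
  | O => 1
  | S j' => prodL r k j' x * (if (S j' =? k)%nat then 1 else x - r (S j'))
  end.

Lemma prodL_S r k j x : prodL r k (S j) x =
  prodL r k j x * (if (S j =? k)%nat then 1 else x - r (S j)).
Proof. reflexivity. Qed.

Lemma prodL_Pol r k j : Pol (S j) (prodL r k j) /\ ((1 <= k <= j)%nat -> Pol j (prodL r k j)).
Proof.
  induction j.
  - split. apply Pol_ext with (fun _ => 1). apply Pol_const. reflexivity. lia.
  - destruct IHj as [A B]. split.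
    + apply Pol_ext with (fun x => prodL r k j x * (if (S j =? k)%nat then 1 else x - r (S j))).
      2:{ intro; symmetry; apply prodL_S. }
      destruct (S j =? k)%nat.
      * apply Pol_S. apply Pol_ext with (prodL r k j); auto. intro; ring.
      * apply Pol_ext with (fun x => (x - r (S j)) * prodL r k j x).
        apply Pol_lin; auto. intro; ring.
    + intro Hk.
      apply Pol_ext with (fun x => prodL r k j x * (if (S j =? k)%nat then 1 else x - r (S j))).
      2:{ intro; symmetry; apply prodL_S. }
      destruct (Nat.eqb_spec (S j) k).
      * apply Pol_ext with (prodL r k j); auto. intro; ring.
      * apply Pol_ext with (fun x => (x - r (S j)) * prodL r k j x).
        apply Pol_lin; auto. apply B; lia. intro; ring.
Qed.

Lemma prodL_zero r k j i : (1 <= i <= j)%nat -> i <> k -> prodL r k j (r i) = 0.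
Proof.
  induction j; intros Hi Hik. lia.
  rewrite prodL_S. destruct (Nat.eq_dec i (S j)).
  - subst. destruct (Nat.eqb_spec (S j) k). lia. ring.
  - rewrite IHj by lia. ring.
Qed.

Lemma prodL_nz r k j : (forall i, (1 <= i <= j)%nat -> i <> k -> r i <> r k) ->
  prodL r k j (r k) <> 0.
Proof.
  induction j; intros H. simpl; lra.
  rewrite prodL_S. apply Rmult_integral_contrapositive. split.
  apply IHj. intros; apply H; lia.
  destruct (Nat.eqb_spec (S j) k). lra.
  intro E. apply (H (S j)); auto. lia. lra.
Qed.

Lemma sum0 n : sum_f_R0 (fun _ => 0) n = 0.
Proof. induction n; simpl; auto; lra. Qed.

Lemma sum_single f n k : (k <= n)%nat -> (forall i, (i <= n)%nat -> i <> k -> f i = 0) ->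
  sum_f_R0 f n = f k.
Proof.
  induction n; intros Hk H.
  - replace k with 0%nat by lia. reflexivity.
  - simpl. destruct (Nat.eq_dec k (S n)).
    + subst. rewrite (sum_eq _ (fun _ => 0)). rewrite sum0. ring.
      intros; apply H; lia.
    + rewrite IHn by (auto; lia). rewrite (H (S n)) by lia. ring.
Qed.

Lemma unique_coef r : r 0%nat = 0 -> (forall i, r i < r (S i)) ->
  forall m c, (forall p, Pol m p -> mom r c m p = 0) ->
  forall k, (k <= m)%nat -> c k = c 0%nat * wseq r m k.
Proof.
  intros H0 Hr m c Hc k Hk.
  destruct (Nat.eq_dec k 0). subst. rewrite wseq0; auto; ring.
  set (d := fun i => c i - c 0%nat * wseq r m i).
  assert (Hd : forall p, Pol m p -> mom r d m p = 0).
  { intros p Hp. unfold mom, d.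
    rewrite (sum_eq _ (fun i => c i * p (r i) + (- c 0%nat) * (wseq r m i * p (r i)))).
    rewrite sum_plus', sum_scal'. fold (mom r c m p). fold (mom r (wseq r m) m p).
    rewrite Hc, wmom; auto. ring. intros; ring. }
  assert (Hp : Pol m (prodL r k m)) by (apply prodL_Pol; lia).
  specialize (Hd _ Hp). unfold mom in Hd.
  rewrite (sum_single _ m k) in Hd; auto.
  - apply Rmult_integral in Hd. destruct Hd as [Hd|Hd].
    + unfold d in Hd. lra.
    + exfalso. revert Hd. apply prodL_nz. intros i Hi Hik E.
      assert (Hcc : (i < k \/ k < i)%nat) by lia.
      destruct Hcc as [Hl|Hl]; apply (rinc r Hr) in Hl; lra.
  - intros i Hi Hik. destruct (Nat.eq_dec i 0).
    + subst. unfold d. rewrite wseq0; auto. ring.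
    + rewrite prodL_zero; auto. ring. lia.
Qed.

Definition PS (n : nat) (c e : nat -> R) (t : R) : R :=
  sum_f_R0 (fun k => c k * Rpower t (e k)) n.

Lemma Rpower_1base x : Rpower 1 x = 1.
Proof. unfold Rpower. rewrite ln_1, Rmult_0_r. apply exp_0. Qed.

Lemma Rpower_pos t x : 0 < Rpower t x.
Proof. unfold Rpower. apply exp_pos. Qed.

Lemma Rpower_m1 t x : 0 < t -> Rpower t (x - 1) * t = Rpower t x.
Proof.
  intro Ht. rewrite <- (Rpower_1 t) at 2 by auto. rewrite <- Rpower_plus.
  f_equal; ring.
Qed.

Lemma dlim_eq f x l l' : derivable_pt_lim f x l -> l = l' -> derivable_pt_lim f x l'.
Proof. intros H E; subst; auto. Qed.

Lemma dlim_ext f g x l : 0 < x -> (forall t, 0 < t -> f t = g t) ->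
  derivable_pt_lim g x l -> derivable_pt_lim f x l.
Proof.
  intros Hx E H eps Heps. destruct (H eps Heps) as [d Hd].
  assert (Hm : 0 < Rmin d (x/2)) by (apply Rmin_pos; [apply cond_pos | lra]).
  exists (mkposreal _ Hm). intros h Hh Hhd. simpl in Hhd.
  assert (Hh1 : Rabs h < d) by (eapply Rlt_le_trans; [apply Hhd | apply Rmin_l]).
  assert (Hh2 : Rabs h < x/2) by (eapply Rlt_le_trans; [apply Hhd | apply Rmin_r]).
  apply Rabs_def2 in Hh2. rewrite !E by lra. apply Hd; auto.
Qed.

Lemma dlim_unique_ext f g x l1 l2 : 0 < x -> (forall t, 0 < t -> f t = g t) ->
  derivable_pt_lim f x l1 -> derivable_pt_lim g x l2 -> l1 = l2.
Proof.
  intros Hx E H1 H2. apply (uniqueness_limite f x); auto. eapply dlim_ext; eauto.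
Qed.

Lemma dlim_sum (f : nat -> R -> R) (l : nat -> R) x n :
  (forall k, (k <= n)%nat -> derivable_pt_lim (f k) x (l k)) ->
  derivable_pt_lim (fun t => sum_f_R0 (fun k => f k t) n) x (sum_f_R0 l n).
Proof.
  induction n; intros H.
  - simpl. apply H; auto.
  - simpl. apply (derivable_pt_lim_plus (fun t => sum_f_R0 (fun k => f k t) n) (f (S n))).
    apply IHn; auto. apply H; auto.
Qed.

Lemma dlim_cmul f x l c : derivable_pt_lim f x l -> derivable_pt_lim (fun t => c * f t) x (c * l).
Proof. intro H. apply (derivable_pt_lim_scal f c x l H). Qed.

Lemma dlim_mulc f x l c : derivable_pt_lim f x l -> derivable_pt_lim (fun t => f t * c) x (l * c).
Proof.
  intro H. pose proof (derivable_pt_lim_scal f c x l H) as H2.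
  intros eps Heps. destruct (H2 eps Heps) as [d Hd]. exists d. intros h Hh Hd'.
  specialize (Hd h Hh Hd'). unfold mult_real_fct in Hd.
  replace ((f (x + h) * c - f x * c) / h - l * c) with ((c * f (x + h) - c * f x) / h - c * l) by (field; auto).
  auto.
Qed.

Lemma dlim_power t e : 0 < t ->
  derivable_pt_lim (fun s => Rpower s e) t (e * Rpower t e / t).
Proof.
  intro Ht. apply dlim_eq with (e * Rpower t (e - 1)). apply derivable_pt_lim_power; auto.
  rewrite <- (Rpower_m1 t e) by auto. field. lra.
Qed.

Lemma PS_deriv n c e t : 0 < t ->
  derivable_pt_lim (PS n c e) t (PS n (fun k => c k * e k) (fun k => e k - 1) t).
Proof.
  intro Ht. unfold PS. apply (dlim_sum (fun k s => c k * Rpower s (e k))).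
  intros k _. rewrite Rmult_assoc. apply dlim_cmul. apply derivable_pt_lim_power; auto.
Qed.

Lemma PS_theta n c e t : 0 < t ->
  PS n (fun k => c k * e k) (fun k => e k - 1) t * t = PS n (fun k => c k * e k) e t.
Proof.
  intro Ht. unfold PS. rewrite Rmult_comm, <- sum_scal'. apply sum_eq. intros i _.
  rewrite <- (Rpower_m1 t (e i)) by auto. ring.
Qed.

Lemma PS_deriv' n c e t : 0 < t ->
  derivable_pt_lim (PS n c e) t (PS n (fun k => c k * e k) e t / t).
Proof.
  intro Ht. apply dlim_eq with (PS n (fun k => c k * e k) (fun k => e k - 1) t).
  apply PS_deriv; auto. rewrite <- PS_theta by auto. field. lra.
Qed.

Lemma fall_shift j x : x * fallP j (x - 1) = fallP (S j) x.
Proof.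
  induction j. simpl. ring.
  change (fallP (S (S j)) x) with (fallP (S j) x * (x - INR (S j))).
  rewrite <- IHj. change (fallP (S j) (x - 1)) with (fallP j (x - 1) * (x - 1 - INR j)).
  rewrite S_INR. ring.
Qed.

Lemma chain j : forall n c e F, (forall t, 0 < t -> F t = PS n c e t) ->
  exists g, has_nth_deriv j F g /\
    forall t, 0 < t -> g t = PS n (fun k => c k * fallP j (e k)) (fun k => e k - INR j) t.
Proof.
  induction j; intros n c e F HF.
  - exists F. split. simpl; auto. intros t Ht. rewrite HF by auto. unfold PS.
    apply sum_eq. intros i _. simpl. f_equal. ring. f_equal. ring.
  - destruct (IHj n (fun k => c k * e k) (fun k => e k - 1) (PS n (fun k => c k * e k) (fun k => e k - 1)))
      as [g [Hg Eg]]. reflexivity.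
    exists g. split.
    + simpl. exists (PS n (fun k => c k * e k) (fun k => e k - 1)). split; auto.
      intros t Ht. eapply dlim_ext; eauto. apply PS_deriv; auto.
    + intros t Ht. rewrite Eg by auto. unfold PS. apply sum_eq. intros i _.
      rewrite <- fall_shift. rewrite S_INR. f_equal. ring. f_equal. ring.
Qed.

Lemma compare f D r t1 t2 : 0 < r -> 0 < t1 <= t2 ->
  (forall s, t1 <= s <= t2 -> derivable_pt_lim f s (D s / s)) ->
  (forall s, t1 <= s <= t2 -> f s - D s / r <= 0) ->
  f t2 <= 0 -> f t1 <= 0.
Proof.
  intros Hr Ht Hd Hle H2.
  destruct (Req_dec t1 t2) as [E|Ne]. subst; auto.
  set (H := fun s => Rpower s (- r) * f s).
  set (H' := fun s => (- r) * Rpower s (- r) / s * f s + Rpower s (- r) * (D s / s)).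
  destruct (MVT_cor2 H H' t1 t2) as [xi [Exi Hxi]]. lra.
  { intros c Hc. unfold H, H'.
    apply (derivable_pt_lim_mult (fun s => Rpower s (-r)) f). apply dlim_power; lra.
    apply Hd; auto. }
  assert (HH' : 0 <= H' xi).
  { unfold H'. specialize (Hle xi ltac:(lra)).
    assert (0 < Rpower xi (-r)) by apply Rpower_pos.
    replace ((- r) * Rpower xi (- r) / xi * f xi + Rpower xi (- r) * (D xi / xi)) with
      ((r * Rpower xi (-r) / xi) * (- (f xi - D xi / r))) by (field; lra).
    apply Rmult_le_pos. apply Rmult_le_pos. apply Rmult_le_pos; lra. left; apply Rinv_0_lt_compat; lra. lra. }
  assert (H t1 <= H t2) by nra.
  unfold H in *. pose proof (Rpower_pos t1 (-r)). pose proof (Rpower_pos t2 (-r)).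
  assert (Rpower t2 (-r) * f t2 <= 0) by nra.
  nra.
Qed.

Lemma decr f f' t1 t2 : t1 <= t2 ->
  (forall s, t1 <= s <= t2 -> derivable_pt_lim f s (f' s)) ->
  (forall s, t1 <= s <= t2 -> f' s <= 0) -> f t2 <= f t1.
Proof.
  intros Ht Hd Hn. destruct (Req_dec t1 t2) as [E|Ne]. subst; lra.
  destruct (MVT_cor2 f f' t1 t2) as [xi [E H]]. lra. auto.
  specialize (Hn xi ltac:(lra)). nra.
Qed.

Section Phi.
Variable r : nat -> R.
Hypothesis r0 : r 0%nat = 0.
Hypothesis rS : forall i, r i < r (S i).

Lemma rpos k : (1 <= k)%nat -> 0 < r k.
Proof. intro. rewrite <- r0. apply rinc; auto. Qed.

Definition phi m t := PS m (wseq r m) r t.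
Definition U m t := PS m (fun k => wseq r m k * r k) r t.
Definition V m t := PS m (fun k => wseq r m k * r k * r k) r t.

Lemma PS_ext n c c' e t : (forall k, (k <= n)%nat -> c k = c' k) -> PS n c e t = PS n c' e t.
Proof. intro H. unfold PS. apply sum_eq. intros i Hi. rewrite H; auto. Qed.

Lemma phi_deriv m t : 0 < t -> derivable_pt_lim (phi m) t (U m t / t).
Proof. intro. apply PS_deriv'; auto. Qed.
Lemma U_deriv m t : 0 < t -> derivable_pt_lim (U m) t (V m t / t).
Proof. intro. apply PS_deriv'; auto. Qed.

Lemma sum_minus_scal f g c n :
  sum_f_R0 f n - c * sum_f_R0 g n = sum_f_R0 (fun k => f k - c * g k) n.
Proof. induction n; simpl; [ring | rewrite <- IHn; ring]. Qed.

Lemma rec_gen (mu : nat -> R) m t :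
  PS (S m) (fun k => wseq r (S m) k * mu k) r t
  - PS (S m) (fun k => wseq r (S m) k * mu k * r k) r t / r (S m)
  = PS m (fun k => wseq r m k * mu k) r t.
Proof.
  assert (HR : 0 < r (S m)) by (apply rpos; lia).
  unfold PS. unfold Rdiv. rewrite (Rmult_comm _ (/ r (S m))), sum_minus_scal.
  rewrite (sum_eq _ (fun k => wseq r (S m) k * mu k * Rpower t (r k) * (1 - r k / r (S m)))).
  2:{ intros; field. lra. }
  change (sum_f_R0 (fun k => wseq r (S m) k * mu k * Rpower t (r k) * (1 - r k / r (S m))) (S m))
    with (sum_f_R0 (fun k => wseq r (S m) k * mu k * Rpower t (r k) * (1 - r k / r (S m))) m
          + wseq r (S m) (S m) * mu (S m) * Rpower t (r (S m)) * (1 - r (S m) / r (S m))).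
  replace (1 - r (S m) / r (S m)) with 0 by (field; lra). rewrite Rmult_0_r, Rplus_0_r.
  apply sum_eq. intros i Hi. rewrite wseq_lt by auto.
  assert (r i < r (S m)) by (apply rinc; auto; lia). field. lra.
Qed.

Lemma phi_rec m t : phi (S m) t - U (S m) t / r (S m) = phi m t.
Proof.
  unfold phi, U. pose proof (rec_gen (fun _ => 1) m t) as H.
  rewrite !(PS_ext _ (fun k => wseq r _ k * 1) (wseq r _)) in H by (intros; ring).
  rewrite (PS_ext _ (fun k => wseq r (S m) k * 1 * r k) (fun k => wseq r (S m) k * r k)) in H by (intros; ring).
  exact H.
Qed.

Lemma U_rec m t : U (S m) t - V (S m) t / r (S m) = U m t.
Proof. unfold U, V. apply (rec_gen r m t). Qed.

Lemma phi_1 m : phi (S m) 1 = 0.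
Proof.
  unfold phi, PS. rewrite <- (wsum r m). apply sum_eq. intros. rewrite Rpower_1base. ring.
Qed.

Lemma U_1 m : U (S (S m)) 1 = 0.
Proof.
  pose proof (phi_rec (S m) 1). rewrite !phi_1 in H.
  assert (0 < r (S (S m))) by (apply rpos; lia).
  assert (U (S (S m)) 1 / r (S (S m)) = 0) by lra.
  unfold Rdiv in H1. apply Rmult_integral in H1. destruct H1; auto.
  exfalso. apply Rinv_neq_0_compat in H1; lra.
Qed.

Lemma phi_0 t : 0 < t -> phi 0 t = 1.
Proof. intro. unfold phi, PS. simpl. rewrite r0, Rpower_O; auto. ring. Qed.

Lemma U_one t : U 1 t = - r 1%nat * Rpower t (r 1%nat).
Proof.
  unfold U, PS. change (sum_f_R0 ?f 1) with (f 0%nat + f 1%nat). cbv beta.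
  rewrite r0. rewrite wseq_top.
  rewrite wseq_lt by lia. simpl sum_f_R0. simpl wseq. rewrite r0.
  assert (0 < r 1%nat) by (apply rpos; lia). field. lra.
Qed.

Lemma Rpower_le1 t e : 0 < t <= 1 -> 0 <= e -> Rpower t e <= 1.
Proof.
  intros Ht He. rewrite <- (Rpower_1base e). apply Rle_Rpower_l; auto; lra.
Qed.

Lemma U_bounds m t : (1 <= m)%nat -> 0 < t <= 1 -> - r 1%nat <= U m t <= 0.
Proof.
  intros Hm. revert t. induction Hm as [|m Hm IH]; intros t Ht.
  - rewrite U_one. assert (0 < r 1%nat) by (apply rpos; lia).
    pose proof (Rpower_le1 t (r 1%nat) Ht ltac:(lra)). pose proof (Rpower_pos t (r 1%nat)).
    split; nra.
  - assert (HR : 0 < r (S m)) by (apply rpos; lia).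
    destruct m as [|m]. lia.
    assert (HR2 : 0 < r (S (S m))) by (apply rpos; lia).
    split.
    + pose (f := fun s => - U (S (S m)) s - r 1%nat).
      assert (H : f t <= 0).
      { apply (compare f (fun s => - V (S (S m)) s) (r (S (S m))) t 1); auto.
        - intros s Hs. apply dlim_eq with (- (V (S (S m)) s / s) - 0).
          apply (derivable_pt_lim_minus (fun s => - U (S (S m)) s) (fct_cte (r 1%nat))).
          apply derivable_pt_lim_opp. apply U_deriv; lra. apply derivable_pt_lim_const.
          field. lra.
        - intros s Hs. unfold f. pose proof (U_rec (S m) s). specialize (IH s ltac:(lra)).
          assert (0 < r (S (S m))) by (apply rpos; lia).
          assert (-(V (S (S m)) s) / r (S (S m)) = -(V (S (S m)) s / r (S (S m)))) by (field; lra).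
          lra.
        - unfold f. rewrite U_1. pose proof (rpos 1%nat ltac:(lia)). lra. }
      unfold f in H. lra.
    + apply (compare _ (V (S (S m))) (r (S (S m))) t 1); auto.
      * intros s Hs. apply U_deriv; lra.
      * intros s Hs. pose proof (U_rec (S m) s). specialize (IH s ltac:(lra)). lra.
      * rewrite U_1. lra.
Qed.

Lemma phi_nonneg m t : 0 < t <= 1 -> 0 <= phi m t.
Proof.
  revert t. induction m; intros t Ht.
  - rewrite phi_0; lra.
  - assert (HR : 0 < r (S m)) by (apply rpos; lia).
    pose (f := fun s => - phi (S m) s).
    assert (H : f t <= 0).
    { apply (compare f (fun s => - U (S m) s) (r (S m)) t 1); auto.
      - intros s Hs. apply dlim_eq with (- (U (S m) s / s)).
        apply (derivable_pt_lim_opp (phi (S m))). apply phi_deriv; lra. field; lra.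
      - intros s Hs. unfold f. pose proof (phi_rec m s). specialize (IHm s ltac:(lra)).
        assert (-(U (S m) s) / r (S m) = -(U (S m) s / r (S m))) by (field; lra). lra.
      - unfold f. rewrite phi_1. lra. }
    unfold f in H. lra.
Qed.

Lemma phi_decr m t1 t2 : 0 < t1 <= t2 -> t2 <= 1 -> phi m t2 <= phi m t1.
Proof.
  intros Ht Ht2. destruct m as [|m].
  - rewrite !phi_0; lra.
  - apply (decr _ (fun s => U (S m) s / s)); auto. lra.
    intros s Hs. apply phi_deriv; lra.
    intros s Hs. pose proof (U_bounds (S m) s ltac:(lia) ltac:(lra)).
    unfold Rdiv. assert (0 < / s) by (apply Rinv_0_lt_compat; lra). nra.
Qed.

Lemma phi_decr_m m t : 0 < t <= 1 -> phi (S m) t <= phi m t.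
Proof.
  intro Ht. pose proof (phi_rec m t). pose proof (U_bounds (S m) t ltac:(lia) Ht).
  assert (HR : 0 < r (S m)) by (apply rpos; lia).
  assert (U (S m) t / r (S m) <= 0).
  { unfold Rdiv. assert (0 < / r (S m)) by (apply Rinv_0_lt_compat; lra). nra. }
  lra.
Qed.

Lemma phi_decr_m' m N t : (m <= N)%nat -> 0 < t <= 1 -> phi N t <= phi m t.
Proof.
  intros H Ht. induction H. lra. pose proof (phi_decr_m m0 t Ht). lra.
Qed.

Lemma phi_pos m t : 0 < t < 1 -> 0 < phi m t.
Proof.
  revert t. induction m; intros t Ht.
  - rewrite phi_0; lra.
  - set (R := r (S m)). assert (HR : 0 < R) by (apply rpos; lia).
    set (v := (t + 1) / 2). assert (Hv : t < v < 1) by (unfold v; lra).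
    set (G := phi m v). assert (HG : 0 < G) by (apply IHm; lra).
    set (K := G * Rpower v (- R)).
    pose (f := fun s => G - K * Rpower s R - phi (S m) s).
    assert (H : f t <= 0).
    { apply (compare f (fun s => - K * R * Rpower s R - U (S m) s) R t v); auto. lra.
      - intros s Hs. apply dlim_eq with ((0 - K * (R * Rpower s R / s)) - U (S m) s / s).
        apply (derivable_pt_lim_minus (fun s => G - K * Rpower s R) (phi (S m))).
        apply (derivable_pt_lim_minus (fct_cte G) (fun s => K * Rpower s R)).
        apply derivable_pt_lim_const. apply dlim_cmul. apply dlim_power; lra.
        apply phi_deriv; lra. field; lra.
      - intros s Hs. unfold f. pose proof (phi_rec m s). fold R in H.
        assert (phi m v <= phi m s) by (apply phi_decr; lra). fold G in H0.
        replace (G - K * Rpower s R - phi (S m) s - (- K * R * Rpower s R - U (S m) s) / R)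
          with (G - (phi (S m) s - U (S m) s / R)) by (field; lra). lra.
      - unfold f, K. rewrite Rmult_assoc, <- Rpower_plus.
        replace (-R + R) with 0 by ring. rewrite Rpower_O by lra.
        pose proof (phi_nonneg (S m) v ltac:(lra)). lra. }
    unfold f in H.
    assert (K * Rpower t R < G).
    { unfold K. rewrite Rmult_assoc. 
      assert (Rpower v (-R) * Rpower t R < 1).
      { assert (Rpower t R < Rpower v R) by (apply Rlt_Rpower_l; lra).
        assert (Rpower v (-R) * Rpower v R = 1).
        { rewrite <- Rpower_plus. replace (-R + R) with 0 by ring. apply Rpower_O; lra. }
        pose proof (Rpower_pos v (-R)). nra. }
      nra. }
    lra.
Qed.

End Phi.

Fixpoint Bs (r : nat -> R) (N : nat) (s B0 : R) (j : nat) : R :=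
  match j with
  | O => B0
  | S j' => Bs r N s B0 j' * r (N + S j')%nat / (r (N + S j')%nat - s)
  end.

Lemma phi_lower (r : nat -> R) : r 0%nat = 0 -> (forall i, r i < r (S i)) -> cv_infty r ->
  (exists l, Un_cv (fun N => sum_f_R0 (fun i => / r (S i)) N) l) ->
  forall a, 0 < a < 1 -> exists d, 0 < d /\ forall m, d <= phi r m a.
Proof.
  intros r0 rS Hinf [l Hl] a Ha.
  set (Sm := fun N => sum_f_R0 (fun i => / r (S i)) N).
  assert (Hgrow : Un_growing Sm).
  { intro n. unfold Sm. simpl. pose proof (rpos r r0 rS (S (S n)) ltac:(lia)).
    pose proof (Rinv_0_lt_compat _ H). lra. }
  assert (Hle_l : forall n, Sm n <= l) by (apply growing_ineq; auto).
  set (u := (a + 1) / 2).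
  assert (Hu : a < u < 1) by (unfold u; lra).
  set (L := ln u - ln a).
  assert (HL : 0 < L) by (unfold L; pose proof (ln_increasing a u ltac:(lra) ltac:(lra)); lra).
  destruct (Hinf (4 * ln 2 / L)) as [N0 HN0].
  destruct (Hl (L / 4) ltac:(lra)) as [N1 HN1].
  set (M := Nat.max N0 N1).
  set (N := S M).
  set (s := r (S N) / 2).
  assert (Hs : 0 < s) by (unfold s; pose proof (rpos r r0 rS (S N) ltac:(lia)); lra).
  assert (HsL : ln 2 < s * L / 2).
  { specialize (HN0 (S N) ltac:(unfold N, M; lia)). unfold s.
    apply (Rmult_lt_compat_r L) in HN0; auto. field_simplify in HN0; [|lra]. lra. }
  assert (Htail : forall j, Sm (M + j)%nat - Sm M <= L / 4).
  { intro j. specialize (HN1 M ltac:(unfold M; lia)). unfold R_dist in HN1.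
    apply Rabs_def2 in HN1. specialize (Hle_l (M + j)%nat). unfold Sm in *. cbv beta in HN1. lra. }
  assert (Hrk : forall k, (S N <= k)%nat -> 2 * s <= r k).
  { intros k Hk. unfold s. pose proof (rinc_le r rS (S N) k Hk). lra. }
  set (dN := phi r N u).
  assert (HdN : 0 < dN) by (apply phi_pos; auto; lra).
  set (A := 1 - dN).
  set (B0 := dN * Rpower u (- s)).
  assert (Hlnu : ln u < 0) by (rewrite <- ln_1; apply ln_increasing; lra).
  assert (Hus : 1 <= Rpower u (- s)).
  { unfold Rpower. pose proof (exp_ineq1_le (- s * ln u)). nra. }
  assert (HB0 : dN <= B0) by (unfold B0; nra).
  set (B := Bs r N s B0).
  assert (HBS : forall j, B (S j) = B j * r (N + S j)%nat / (r (N + S j)%nat - s)) by reflexivity.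
  assert (HBlow : forall j, dN <= B j).
  { induction j. change (B 0%nat) with B0. exact HB0. rewrite HBS.
    pose proof (Hrk (N + S j)%nat ltac:(lia)).
    assert (B j <= B j * r (N + S j)%nat / (r (N + S j)%nat - s)).
    { apply Rmult_le_reg_r with (r (N + S j)%nat - s). lra.
      field_simplify; [|lra]. nra. }
    lra. }
  assert (HBup : forall j, B j <= B0 * exp (2 * s * (Sm (M + j)%nat - Sm M))).
  { induction j.
    - rewrite Nat.add_0_r. replace (Sm M - Sm M) with 0 by ring.
      rewrite Rmult_0_r, exp_0. change (B 0%nat) with B0. lra.
    - rewrite HBS. set (R := r (N + S j)%nat).
      assert (HR : 2 * s <= R) by (apply Hrk; lia).
      assert (ES : Sm (M + S j)%nat = Sm (M + j)%nat + / R).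
      { unfold Sm, R. replace (M + S j)%nat with (S (M + j)) by lia. simpl.
        replace (N + S j)%nat with (S (S (M + j))) by (unfold N; lia).
        replace (M + S j)%nat with (S (M + j)) by lia. reflexivity. }
      rewrite ES.
      replace (2 * s * (Sm (M + j)%nat + / R - Sm M)) with
        (2 * s * (Sm (M + j)%nat - Sm M) + 2 * s / R) by (field; lra).
      rewrite exp_plus.
      assert (Hq : R / (R - s) <= exp (2 * s / R)).
      { apply Rle_trans with (1 + 2 * s / R); [|apply exp_ineq1_le].
        apply Rmult_le_reg_r with ((R - s) * R). nra.
        field_simplify; [|lra|lra]. nra. }
      pose proof (HBlow j).
      assert (0 <= B0 * exp (2 * s * (Sm (M + j)%nat - Sm M))).
      { pose proof (exp_pos (2 * s * (Sm (M + j)%nat - Sm M))). nra. }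
      unfold Rdiv in *. rewrite Rmult_assoc.
      rewrite <- Rmult_assoc with (r1 := B0). apply Rmult_le_compat; try lra.
      apply Rmult_le_pos; [lra|]. left; apply Rinv_0_lt_compat; lra. }
  assert (Hmain : forall j t, 0 < t <= 1 -> 1 - phi r (N + j) t <= A + B j * Rpower t s).
  { induction j; intros t Ht.
    - rewrite Nat.add_0_r. change (B 0%nat) with B0. destruct (Rle_dec t u).
      + pose proof (phi_decr r r0 rS N t u ltac:(lra) ltac:(lra)).
        pose proof (Rpower_pos t s). unfold A. fold dN in H. nra.
      + pose proof (phi_nonneg r r0 rS N t Ht).
        assert (Rpower u s <= Rpower t s) by (apply Rle_Rpower_l; lra).
        assert (Rpower u (-s) * Rpower u s = 1).
        { rewrite <- Rpower_plus. replace (-s + s) with 0 by ring. apply Rpower_O; lra. }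
        pose proof (Rpower_pos u (-s)).
        assert (1 <= Rpower u (-s) * Rpower t s) by nra.
        unfold A, B0. rewrite Rmult_assoc. nra.
    - replace (N + S j)%nat with (S (N + j)) by lia.
      set (m := S (N + j)). set (R := r m).
      assert (HR : 2 * s <= R) by (apply Hrk; unfold m; lia).
      assert (EB : B (S j) * (1 - s / R) = B j).
      { rewrite HBS. replace (N + S j)%nat with m by (unfold m; lia). fold R. field. lra. }
      pose (f := fun x => 1 - phi r m x - A - B (S j) * Rpower x s).
      assert (H : f t <= 0).
      { apply (compare f (fun x => - U r m x - B (S j) * (s * Rpower x s)) R t 1).
        - lra.
        - lra.
        - intros x Hx. unfold f.
          apply dlim_eq with (((0 - U r m x / x) - 0) - B (S j) * (s * Rpower x s / x)).
          apply (derivable_pt_lim_minus (fun x => 1 - phi r m x - A) (fun x => B (S j) * Rpower x s)).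
          apply (derivable_pt_lim_minus (fun x => 1 - phi r m x) (fct_cte A)).
          apply (derivable_pt_lim_minus (fct_cte 1) (phi r m)).
          apply derivable_pt_lim_const. apply phi_deriv; lra. apply derivable_pt_lim_const.
          apply dlim_cmul. apply dlim_power; lra. field; lra.
        - intros x Hx. unfold f. specialize (IHj x ltac:(lra)).
          pose proof (phi_rec r r0 rS (N + j) x). fold m R in H.
          replace (1 - phi r m x - A - B (S j) * Rpower x s -
                   (- U r m x - B (S j) * (s * Rpower x s)) / R)
            with (1 - (phi r m x - U r m x / R) - A - B (S j) * (1 - s / R) * Rpower x s)
            by (field; lra).
          rewrite EB, H. lra.
        - unfold f, m. rewrite phi_1, Rpower_1base. pose proof (HBlow (S j)). unfold A. lra. }
      unfold f in H. lra. }
  exists (dN / 2). split. lra.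
  intro m. destruct (Nat.le_gt_cases N m) as [Hm|Hm].
  - replace m with (N + (m - N))%nat by lia. set (j := (m - N)%nat).
    specialize (Hmain j a ltac:(lra)).
    pose proof (HBup j). pose proof (Htail j).
    assert (Hk : Rpower a s * (Rpower u (- s) * exp (2 * s * (Sm (M + j)%nat - Sm M))) <= / 2).
    { unfold Rpower. rewrite <- !exp_plus.
      replace (/ 2) with (exp (- ln 2)) by (rewrite exp_Ropp, exp_ln; lra).
      assert (s * ln a + (- s * ln u + 2 * s * (Sm (M + j)%nat - Sm M)) <= - ln 2).
      { replace (s * ln a + (- s * ln u + 2 * s * (Sm (M + j)%nat - Sm M))) with
          (- s * L + 2 * s * (Sm (M + j)%nat - Sm M)) by (unfold L; ring). nra. }
      destruct H1. left; apply exp_increasing; auto. rewrite H1; lra. }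
    assert (B j * Rpower a s <= dN / 2).
    { pose proof (Rpower_pos a s).
      apply Rle_trans with (B0 * exp (2 * s * (Sm (M + j)%nat - Sm M)) * Rpower a s). nra.
      unfold B0. replace (dN * Rpower u (- s) * exp (2 * s * (Sm (M + j)%nat - Sm M)) * Rpower a s)
        with (dN * (Rpower a s * (Rpower u (- s) * exp (2 * s * (Sm (M + j)%nat - Sm M))))) by ring.
      nra. }
    unfold A in Hmain. lra.
  - pose proof (phi_decr_m' r r0 rS m N a ltac:(lia) ltac:(lra)).
    pose proof (phi_decr r r0 rS N a u ltac:(lra) ltac:(lra)). fold dN in H0. lra.
Qed.

Lemma norm_inf_nonneg s v : 0 <= norm_inf s v.
Proof. induction s; simpl. lra. apply Rle_trans with (norm_inf s v); auto. apply Rmax_l. Qed.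

Lemma norm_inf_ge s v i : (i < s)%nat -> Rabs (v i) <= norm_inf s v.
Proof.
  induction s; intro H. lia. simpl. destruct (Nat.eq_dec i s).
  subst. apply Rmax_r. apply Rle_trans with (norm_inf s v). apply IHs; lia. apply Rmax_l.
Qed.

Lemma norm_inf_ext s v w : (forall i, (i < s)%nat -> v i = w i) -> norm_inf s v = norm_inf s w.
Proof.
  induction s; intro H; simpl; auto. rewrite IHs by (intros; apply H; lia). rewrite H by lia. auto.
Qed.

Lemma norm_inf_scal s v x : norm_inf s (fun i => x * v i) = Rabs x * norm_inf s v.
Proof.
  induction s; simpl. ring. rewrite IHs, Rabs_mult.
  pose proof (Rabs_pos x). unfold Rmax.
  destruct (Rle_dec (Rabs x * norm_inf s v) (Rabs x * Rabs (v s)));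
  destruct (Rle_dec (norm_inf s v) (Rabs (v s))); nra.
Qed.

Lemma sum_two f m : (1 <= m)%nat -> (forall k, (2 <= k <= m)%nat -> f k = 0) ->
  sum_f_R0 f m = f 0%nat + f 1%nat.
Proof.
  induction m; intros Hm H. lia.
  destruct m. reflexivity.
  change (sum_f_R0 f (S (S m))) with (sum_f_R0 f (S m) + f (S (S m))).
  rewrite IHm. rewrite (H (S (S m))) by lia. ring. lia. intros k Hk; apply H; lia.
Qed.

Theorem mainTheorem7 :
  forall r : nat -> R,
    r 0%nat = 0 ->
    (forall i, r i < r (S i)) ->
    cv_infty r ->
    (exists l, Un_cv (fun N => sum_f_R0 (fun i => / r (S i)) N) l) ->
  forall a : R, 0 < a < 1 ->
  exists c : R, 0 < c /\
    forall (s n : nat) (A : nat -> nat -> R) (dP : nat -> R),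
      (1 <= n)%nat ->
      (forall i, (i < s)%nat ->
         derivable_pt_lim (fun t => Efun r n (fun k => A k i) t) a (dP i)) ->
      (exists i, (i < s)%nat /\ dP i <> 0) ->
      forall (m : nat) (B : nat -> R -> R) (eta : nat -> nat -> R),
        (n <= m)%nat ->
        CB_basis r m a 1 B ->
        (forall i t, (i < s)%nat -> 0 < t ->
           Efun r n (fun k => A k i) t = sum_f_R0 (fun k => B k t * eta k i) m) ->
        norm_inf s (fun i => eta 0%nat i - eta 1%nat i) >= norm_inf s dP / c /\
        norm_inf s dP / c > 0.
Proof.
  intros r r0 rS Hinf Hsum a Ha.
  destruct (phi_lower r r0 rS Hinf Hsum a Ha) as [d [Hd Hphi]].
  assert (Hr1 : 0 < r 1%nat) by (apply rpos; auto).
  exists (r 1%nat / (a * d)). split.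
  { apply Rdiv_lt_0_compat; auto. nra. }
  intros s n A dP Hn HdP Hnz m B eta Hnm [HB1 [HB2 [HB3 HB4]]] Heq.
  assert (Hm : (1 <= m)%nat) by lia.
  assert (Hex : forall k, exists c : nat -> R, (k <= m)%nat -> forall t, 0 < t -> B k t = Efun r m c t).
  { intro k. destruct (Compare_dec.le_dec k m) as [Hk|Hk].
    - destruct (HB1 k Hk) as [c Hc]. exists c; auto.
    - exists (fun _ => 0). intro; lia. }
  set (cB := fun k => proj1_sig (constructive_indefinite_description _ (Hex k))).
  assert (HcB : forall k, (k <= m)%nat -> forall t, 0 < t -> B k t = PS m (cB k) r t).
  { intros k Hk t Ht. unfold cB. destruct (constructive_indefinite_description _ (Hex k)) as [c Hc].
    simpl. apply Hc; auto. }
  assert (HBa : forall k, (1 <= k <= m)%nat -> B k a = 0).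
  { intros k Hk. destruct (HB4 k ltac:(lia)) as [[_ [Z _]] _].
    apply (Z 0%nat (B k)). lia. simpl; auto. }
  assert (HB0a : B 0%nat a = 1).
  { rewrite <- (HB3 a ltac:(lra)). symmetry. apply (sum_single (fun k => B k a) m 0). lia.
    intros i Hi Hi0. apply HBa; lia. }
  set (c0 := cB 0%nat).
  assert (Hmom : forall j, (j < m)%nat -> sum_f_R0 (fun k => c0 k * fallP j (r k)) m = 0).
  { intros j Hj. destruct (chain j m c0 r (B 0%nat)) as [g [Hg Eg]].
    { intros t Ht. apply HcB; auto; lia. }
    destruct (HB4 0%nat ltac:(lia)) as [_ [_ [Z _]]].
    specialize (Z j g ltac:(lia) Hg). rewrite Eg in Z by lra. unfold PS in Z.
    rewrite <- Z. apply sum_eq. intros. rewrite Rpower_1base. ring. }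
  pose proof (unique_coef r r0 rS m c0 (mom_from_fall r c0 m Hmom)) as Hc0.
  assert (HB0phi : forall t, 0 < t -> B 0%nat t = c0 0%nat * phi r m t).
  { intros t Ht. rewrite HcB by (auto; lia). fold c0. unfold phi, PS.
    rewrite <- sum_scal'. apply sum_eq. intros i Hi. rewrite Hc0 by auto. ring. }
  assert (Hc0a : c0 0%nat * phi r m a = 1) by (rewrite <- HB0phi; lra).
  set (dl := fun k => PS m (fun j => cB k j * r j) r a / a).
  assert (Hdl : forall k, (k <= m)%nat -> derivable_pt_lim (B k) a (dl k)).
  { intros k Hk. apply dlim_ext with (PS m (cB k) r). lra. intros; apply HcB; auto.
    apply PS_deriv'. lra. }
  assert (Hdl_sum : sum_f_R0 dl m = 0).
  { apply (dlim_unique_ext (fun t => sum_f_R0 (fun k => B k t) m) (fct_cte 1) a). lra.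
    intros t Ht. rewrite HB3; auto.
    apply (dlim_sum B dl). auto. apply derivable_pt_lim_const. }
  assert (Hdl2 : forall k, (2 <= k <= m)%nat -> dl k = 0).
  { intros k Hk. destruct (HB4 k ltac:(lia)) as [[_ [Z _]] _].
    apply (Z 1%nat (fun t => PS m (fun j => cB k j * r j) r t / t)). lia.
    simpl. exists (fun t => PS m (fun j => cB k j * r j) r t / t). split; auto.
    intros t Ht. apply dlim_ext with (PS m (cB k) r). auto. intros; apply HcB; auto; lia.
    apply PS_deriv'. auto. }
  assert (Hdl0 : dl 0%nat = c0 0%nat * U r m a / a).
  { unfold dl, U. fold c0. unfold PS. rewrite <- sum_scal'. unfold Rdiv. f_equal.
    apply sum_eq. intros i Hi. rewrite Hc0 by auto. ring. }
  assert (Hdl01 : dl 1%nat = - dl 0%nat).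
  { rewrite (sum_two dl m Hm Hdl2) in Hdl_sum. lra. }
  assert (HdPi : forall i, (i < s)%nat -> dP i = dl 0%nat * (eta 0%nat i - eta 1%nat i)).
  { intros i Hi.
    assert (E : dP i = sum_f_R0 (fun k => dl k * eta k i) m).
    { apply (dlim_unique_ext (fun t => Efun r n (fun k => A k i) t)
               (fun t => sum_f_R0 (fun k => B k t * eta k i) m) a). lra.
      intros; apply Heq; auto. apply HdP; auto.
      apply (dlim_sum (fun k t => B k t * eta k i)). intros k Hk. apply dlim_mulc. auto. }
    rewrite E. rewrite (sum_two _ m Hm). rewrite Hdl01. ring.
    intros k Hk. rewrite Hdl2; auto. ring. }
  assert (HN : norm_inf s dP = Rabs (dl 0%nat) * norm_inf s (fun i => eta 0%nat i - eta 1%nat i)).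
  { rewrite <- norm_inf_scal. apply norm_inf_ext. auto. }
  assert (Hbd : Rabs (dl 0%nat) <= r 1%nat / (a * d)).
  { specialize (Hphi m). pose proof (U_bounds r r0 rS m a Hm ltac:(lra)).
    assert (Hc0e : c0 0%nat = / phi r m a) by (field_simplify_eq; [lra| lra]).
    rewrite Hdl0, Hc0e.
    replace (/ phi r m a * U r m a / a) with (U r m a / (a * phi r m a)) by (field; lra).
    unfold Rdiv. rewrite Rabs_mult, Rabs_inv. rewrite (Rabs_right (a * phi r m a)) by nra. fold (Rdiv (Rabs (U r m a)) (a * phi r m a)).
    apply Rle_trans with (r 1%nat / (a * phi r m a)).
    - apply Rmult_le_compat_r. left; apply Rinv_0_lt_compat; nra.
      rewrite Rabs_left1 by lra. lra.
    - apply Rmult_le_compat_l. lra. apply Rinv_le_contravar; nra. }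
  assert (Hpos : 0 < norm_inf s dP).
  { destruct Hnz as [i [Hi Hi0]]. pose proof (norm_inf_ge s dP i Hi).
    pose proof (Rabs_pos_lt _ Hi0). lra. }
  set (c := r 1%nat / (a * d)). fold c in Hbd.
  assert (Hc : 0 < c) by (unfold c; apply Rdiv_lt_0_compat; auto; nra).
  split.
  - apply Rle_ge. rewrite HN. pose proof (norm_inf_nonneg s (fun i => eta 0%nat i - eta 1%nat i)).
    apply Rmult_le_reg_r with c; auto. unfold Rdiv. rewrite Rmult_assoc, Rinv_l by lra. nra.
  - apply Rlt_gt. apply Rdiv_lt_0_compat; auto.
Qed.
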